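(* Assume all target-SINRs satisfy $\gamma^{\mathrm{tar}}_i>0$. Let $\boldsymbol{\gamma}^\star$ be an optimal solution of the SINR-assignment problem $$\max_{\boldsymbol{\gamma}\in\mathbf{T}_{\boldsymbol{\gamma}}} |\mathcal{A}(\boldsymbol{\gamma})| \quad\text{s.t.}\quad \boldsymbol{\gamma}\in\mathbf{F}_{\boldsymbol{\gamma}}\cap\mathbf{G}_{\boldsymbol{\gamma}}.$$ Then the power vector $\mathbf{p}(\boldsymbol{\gamma}^\star)=(\mathbf{I}-\mathbf{F}(\boldsymbol{\gamma}^\star))^{-1}\mathbf{U}(\boldsymbol{\gamma}^\star)$ is an optimal solution of the power-allocation problem $$\max_{\mathbf{p}} |\mathcal{S}(\mathbf{p})| \quad\text{s.t.}\quad 0\le p_i\le p^{\max}_i\ \forall i\in\mathcal{M},\quad \mathbf{p}\in\mathbf{G}_{\mathbf{p}},$$ and it is a minimal element (componentwise) of the set of optimal solutions of this power-allocation problem, i.e., no other optimal solution $\mathbf{p}'\neq \mathbf{p}(\boldsymbol{\gamma}^\star)$ satisfies $\mathbf{p}'\le \mathbf{p}(\boldsymbol{\gamma}^\star)$ componentwise.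
   Context: Uplink multi-tier cellular model: users $\mathcal{M}=\{1,\dots,M\}$, base stations (BSs) $\mathcal{B}=\{1,\dots,B\}$, priority levels $\mathcal{K}=\{1,\dots,K\}$ ($1$ = highest). User $i$ is served by BS $b_i$; each user belongs to a priority level, and $\mathcal{M}^{\mathcal{K}}_q$ denotes the set of users with priority $q$. Uplink path gains $h_{m,i}>0$ (from user $i$ to BS $m$), noise powers $N_m>0$ at BS $m$, maximum powers $p_i^{\max}>0$. For a power vector $\mathbf{p}\in\mathbb{R}^M$, the SINR of user $i$ is $\gamma_i(\mathbf{p})=\frac{h_{b_i,i}p_i}{\sum_{j\ne i}h_{b_i,j}p_j+N_{b_i}}$. For an SINR vector $\boldsymbol{\gamma}\ge 0$, $\mathbf{p}(\boldsymbol{\gamma})=(\mathbf{I}-\mathbf{F}(\boldsymbol{\gamma}))^{-1}\mathbf{U}(\boldsymbol{\gamma})$ where $U_i=\gamma_iN_{b_i}/h_{b_i,i}$, $F_{ii}=0$, $F_{ij}=\gamma_i h_{b_i,j}/h_{b_i,i}$ for $i\ne j$ (assumed invertible whenever used). $\mathbf{F}_{\boldsymbol{\gamma}}=\{\boldsymbol{\gamma}: 0\le p_i(\boldsymbol{\gamma})\le p_i^{\max}\ \forall i\}$ (feasible SINR vectors). $\mathbf{T}_{\boldsymbol{\gamma}}=\prod_{i\in\mathcal{M}}\{\gamma^{\mathrm{tar}}_i,0\}$. $\mathcal{A}(\boldsymbol{\gamma})=\{i:\gamma_i>0\}$. $\mathcal{S}(\mathbf{p})=\{i:\gamma_i(\mathbf{p})\ge\gamma^{\mathrm{tar}}_i\}$.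 Priority constraint sets: $\mathbf{G}_{\mathbf{p}}$ is the set of $\mathbf{p}$ such that whenever some $i\in\mathcal{M}^{\mathcal{K}}_q$ with $q>1$ has $\gamma_i(\mathbf{p})\ge\gamma^{\mathrm{tar}}_i$, then $\gamma_j(\mathbf{p})\ge\gamma^{\mathrm{tar}}_j$ for all $j\in\mathcal{M}^{\mathcal{K}}_{q'}$, $q'<q$; $\mathbf{G}_{\boldsymbol{\gamma}}$ is defined identically with $\gamma_i$ in place of $\gamma_i(\mathbf{p})$. *)

(* Defs.v *)
(* R is an arbitrary real field (the statement is purely
   algebraic / order-theoretic). Users are 'I_M, base stations 'I_B,
   priority levels 'I_K with level 0 = highest priority (paper's level 1). *)
From HB Require Import structures.
From mathcomp Require Import all_boot all_order all_algebra.
Set Implicit Arguments. Unset Strict Implicit. Unset Printing Implicit Defensive.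
Import Order.TTheory GRing.Theory Num.Theory.
Local Open Scope ring_scope.

Section Model.
Variables (R : realFieldType) (M B K : nat).
Variable (b : 'I_M -> 'I_B).          (* serving BS of user i *)
Variable (prio : 'I_M -> 'I_K).       (* priority level of user i, 0 = highest *)
Variable (h : 'I_B -> 'I_M -> R).     (* h m i : path gain from user i to BS m *)
Variable (N : 'I_B -> R).
Variable (pmax tar : 'I_M -> R).

Definition sinr (p : 'I_M -> R) (i : 'I_M) : R :=
  h (b i) i * p i / (\sum_(j < M | j != i) h (b i) j * p j + N (b i)).

Definition Fmat (g : 'I_M -> R) : 'M[R]_M :=
  \matrix_(i, j) (if i == j then 0 else g i * h (b i) j / h (b i) i).
Definition Uvec (g : 'I_M -> R) : 'cV[R]_M :=
  \col_i (g i * N (b i) / h (b i) i).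

Definition pgam (g : 'I_M -> R) : 'I_M -> R :=
  fun i => (invmx (1%:M - Fmat g) *m Uvec g) i 0.

(* feasible SINR set F_gamma (with I - F(gamma) invertible, as assumed
   whenever p(gamma) is used) *)
Definition Fgam (g : 'I_M -> R) : Prop :=
  [/\ forall i, 0 <= g i,
      (1%:M - Fmat g) \in unitmx &
      forall i, 0 <= pgam g i <= pmax i].

Definition Tgam (g : 'I_M -> R) : Prop := forall i, g i = tar i \/ g i = 0.

Definition Acard (g : 'I_M -> R) : nat := #|[set i : 'I_M | 0 < g i]|.

Definition Scard (p : 'I_M -> R) : nat := #|[set i : 'I_M | tar i <= sinr p i]|.

Definition Gp (p : 'I_M -> R) : Prop :=
  forall i, (0 < (prio i : nat))%N -> tar i <= sinr p i ->
    forall j, ((prio j : nat) < prio i)%N -> tar j <= sinr p j.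
Definition Ggam (g : 'I_M -> R) : Prop :=
  forall i, (0 < (prio i : nat))%N -> tar i <= g i ->
    forall j, ((prio j : nat) < prio i)%N -> tar j <= g j.

Definition sinr_feasible (g : 'I_M -> R) : Prop := Tgam g /\ Fgam g /\ Ggam g.
Definition sinr_optimal (g : 'I_M -> R) : Prop :=
  sinr_feasible g /\ forall g', sinr_feasible g' -> (Acard g' <= Acard g)%N.

Definition pow_feasible (p : 'I_M -> R) : Prop :=
  (forall i, 0 <= p i <= pmax i) /\ Gp p.
Definition pow_optimal (p : 'I_M -> R) : Prop :=
  pow_feasible p /\ forall p', pow_feasible p' -> (Scard p' <= Scard p)%N.
End Model.

(* Main.v *)
Require Import Defs.
From HB Require Import structures.
From mathcomp Require Import all_boot all_order all_algebra.
From mathcomp Require Import ring lra.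
Import Order.TTheory GRing.Theory Num.Theory.
Local Open Scope ring_scope.

Set Implicit Arguments. Unset Strict Implicit.

Lemma exists_min (R : realFieldType) (M : nat) (f : 'I_M -> R) (k : 'I_M) :
  exists i, forall j, f i <= f j.
Proof.
case: (@arg_minP _ R 'I_M k predT f erefl) => i _ H.
by exists i => j; apply: H.
Qed.

Lemma mono (R : realFieldType) (M : nat) (F : 'I_M -> 'I_M -> R) (x w : 'I_M -> R) :
  (forall i j, 0 <= F i j) -> (forall i, 0 <= x i) ->
  (forall i, (forall j, F i j = 0) \/ \sum_j F i j * x j < x i) ->
  (forall i, \sum_j F i j * w j <= w i) -> forall i, 0 <= w i.
Proof.
move=> F0 x0 HF Hw.
have wpos0 : forall i, x i = 0 -> 0 <= w i.
  move=> i xi0; case: (HF i) => [Fz|lt].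
    by have := Hw i; rewrite big1 // => j _; rewrite Fz mul0r.
  exfalso; move: lt; rewrite xi0 ltNge => /negP; apply.
  by apply: sumr_ge0 => j _; apply: mulr_ge0.
move=> k; rewrite leNgt; apply/negP => wk.
have xk : 0 < x k.
  rewrite lt_neqAle x0 andbT; apply/eqP => xk0.
  by move: (wpos0 k (esym xk0)); rewrite leNgt wk.
have [i Hi] := @exists_min R M (fun j => w j / x j) k.
set t := w i / x i.
have tneg : t < 0.
  apply: le_lt_trans (Hi k) _; by rewrite pmulr_llt0 ?invr_gt0.
have xi : 0 < x i.
  rewrite lt_neqAle x0 andbT; apply/eqP => xi0.
  by move: tneg; rewrite /t -xi0 invr0 mulr0 ltxx.
have wi : w i = t * x i by rewrite /t divfK // gt_eqF.
have tx : forall j, t * x j <= w j.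
  move=> j; case: (eqVneq (x j) 0) => [xj0|xjn0].
    by rewrite xj0 mulr0; apply: wpos0.
  have xj : 0 < x j by rewrite lt_neqAle eq_sym xjn0 x0.
  by rewrite -ler_pdivlMr //; apply: Hi.
have H1 : t * \sum_j F i j * x j <= t * x i.
  rewrite -wi mulr_sumr; apply: le_trans (Hw i).
  apply: ler_sum => j _; rewrite mulrCA; apply: ler_wpM2l => //; apply: tx.
have H2 : x i <= \sum_j F i j * x j by rewrite -(ler_nM2l tneg).
case: (HF i) => [Fz|lt].
  move: H2; rewrite big1 ?leNgt ?xi // => j _; by rewrite Fz mul0r.
by move: H2; rewrite leNgt lt.
Qed.

Lemma IFv (R : realFieldType) (M : nat) (A : 'M[R]_M) (v : 'cV[R]_M) i :
  ((1%:M - A) *m v) i 0 = v i 0 - \sum_j A i j * v j 0.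
Proof. by rewrite mulmxBl mul1mx !mxE. Qed.

Lemma unit_lem (R : realFieldType) (M : nat) (A : 'M[R]_M) (x : 'I_M -> R) :
  (forall i j, 0 <= A i j) -> (forall i, 0 <= x i) ->
  (forall i, (forall j, A i j = 0) \/ \sum_j A i j * x j < x i) ->
  (1%:M - A) \in unitmx.
Proof.
move=> A0 x0 HA.
rewrite -unitmx_tr -row_free_unit; apply: inj_row_free => v Hv.
have Hu : (1%:M - A) *m v^T = 0 by rewrite -[_ *m _]trmxK trmx_mul trmxK Hv trmx0.
have Hs : forall i, \sum_j A i j * v^T j 0 = v^T i 0.
  move=> i; apply/eqP; rewrite eq_sym -subr_eq0 -IFv Hu mxE //.
have P1 := @mono R M (fun i j => A i j) x (fun j => v^T j 0) A0 x0 HA.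
have P2 := @mono R M (fun i j => A i j) x (fun j => - v^T j 0) A0 x0 HA.
apply/matrixP => i j; rewrite [RHS]mxE.
have e : v i j = v^T j 0 by rewrite mxE (ord1 i).
rewrite e; apply/eqP; rewrite eq_le P1 ?oppr_ge0 ?andbT; last by move=> k; rewrite Hs.
rewrite -oppr_ge0; apply: P2 => k; rewrite -(Hs k) -sumrN le_eqVlt; apply/orP; left; apply/eqP.
by apply: eq_bigr => l _; rewrite mulrN.
Qed.

Lemma L_Fsum (R : realFieldType) (M B : nat) (b : 'I_M -> 'I_B)
  (h : 'I_B -> 'I_M -> R) (g p : 'I_M -> R) i :
  \sum_j Fmat b h g i j * p j =
  g i / h (b i) i * \sum_(j < M | j != i) h (b i) j * p j.
Proof.
rewrite (bigD1 i) //= mxE eqxx mul0r add0r mulr_sumr; apply: eq_bigr => j ji.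
by rewrite mxE eq_sym (negbTE ji); ring.
Qed.

Lemma L_F0 (R : realFieldType) (M B : nat) (b : 'I_M -> 'I_B)
  (h : 'I_B -> 'I_M -> R) (g : 'I_M -> R) :
  (forall m i, 0 < h m i) -> (forall i, 0 <= g i) ->
  forall i j, 0 <= Fmat b h g i j.
Proof.
move=> hpos g0 i j; rewrite mxE; case: eqP => // _.
by rewrite mulr_ge0 ?invr_ge0 ?mulr_ge0 // ltW.
Qed.

Lemma L_Frow (R : realFieldType) (M B : nat) (b : 'I_M -> 'I_B)
  (h : 'I_B -> 'I_M -> R) (g : 'I_M -> R) i :
  g i = 0 -> forall j, Fmat b h g i j = 0.
Proof. by move=> gi j; rewrite mxE gi !mul0r; case: eqP. Qed.

Lemma L_den (R : realFieldType) (M B : nat) (b : 'I_M -> 'I_B)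
  (h : 'I_B -> 'I_M -> R) (N : 'I_B -> R) (p : 'I_M -> R) i :
  (forall m i, 0 < h m i) -> (forall m, 0 < N m) -> (forall i, 0 <= p i) ->
  0 < \sum_(j < M | j != i) h (b i) j * p j + N (b i).
Proof.
move=> hpos Npos p0; apply: ltr_wpDl (Npos _).
by apply: sumr_ge0 => j _; rewrite mulr_ge0 // ltW.
Qed.

Lemma L_P3 (R : realFieldType) (M B : nat) (b : 'I_M -> 'I_B)
  (h : 'I_B -> 'I_M -> R) (N : 'I_B -> R) (g p : 'I_M -> R) :
  (forall m i, 0 < h m i) -> (forall m, 0 < N m) ->
  (forall i, 0 <= g i) -> (forall i, 0 <= p i) ->
  (forall i, 0 < g i -> g i <= sinr b h N p i) ->
  forall i, \sum_j Fmat b h g i j * p j + Uvec b h N g i 0 <= p i.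
Proof.
move=> hpos Npos g0 p0 Hg i.
rewrite L_Fsum mxE.
case: (eqVneq (g i) 0) => [->|gn0].
  by rewrite !mul0r addr0.
have gi : 0 < g i by rewrite lt_neqAle eq_sym gn0 g0.
have := Hg i gi; rewrite /sinr.
have D := @L_den _ _ _ b h N p i hpos Npos p0.
set S := \sum_(j < M | j != i) h (b i) j * p j in D *.
have hi := hpos (b i) i.
rewrite ler_pdivlMr // => H.
have -> : g i / h (b i) i * S + g i * N (b i) / h (b i) i = (g i * (S + N (b i))) / h (b i) i.
  by rewrite mulrDr mulrDl; congr (_ + _); rewrite mulrAC.
by rewrite ler_pdivrMr // [X in _ <= X]mulrC.
Qed.

Lemma L_H (R : realFieldType) (M B : nat) (b : 'I_M -> 'I_B)
  (h : 'I_B -> 'I_M -> R) (N : 'I_B -> R) (g p : 'I_M -> R) :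
  (forall m i, 0 < h m i) -> (forall m, 0 < N m) ->
  (forall i, 0 <= g i) ->
  (forall i, \sum_j Fmat b h g i j * p j + Uvec b h N g i 0 <= p i) ->
  forall i, (forall j, Fmat b h g i j = 0) \/ \sum_j Fmat b h g i j * p j < p i.
Proof.
move=> hpos Npos g0 HP i.
case: (eqVneq (g i) 0) => [gi|gn0]; first by left; apply: L_Frow.
right; apply: lt_le_trans (HP i); rewrite ltrDl mxE.
have gi : 0 < g i by rewrite lt_neqAle eq_sym gn0 g0.
by rewrite divr_gt0 ?mulr_gt0.
Qed.

Lemma L_peq (R : realFieldType) (M B : nat) (b : 'I_M -> 'I_B)
  (h : 'I_B -> 'I_M -> R) (N : 'I_B -> R) (g : 'I_M -> R) :
  (1%:M - Fmat b h g) \in unitmx ->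
  forall i, pgam b h N g i = \sum_j Fmat b h g i j * pgam b h N g j + Uvec b h N g i 0.
Proof.
move=> U i.
have E : (1%:M - Fmat b h g) *m (invmx (1%:M - Fmat b h g) *m Uvec b h N g) = Uvec b h N g.
  by rewrite mulmxA mulmxV // mul1mx.
move/matrixP: E => /(_ i 0); rewrite IFv => <-.
rewrite /pgam; ring.
Qed.

Lemma L_all (R : realFieldType) (M B : nat) (b : 'I_M -> 'I_B)
  (h : 'I_B -> 'I_M -> R) (N : 'I_B -> R) (g p : 'I_M -> R) :
  (forall m i, 0 < h m i) -> (forall m, 0 < N m) ->
  (forall i, 0 <= g i) -> (forall i, 0 <= p i) ->
  (forall i, 0 < g i -> g i <= sinr b h N p i) ->
  [/\ (1%:M - Fmat b h g) \in unitmx,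
      forall i, 0 <= pgam b h N g i &
      forall i, pgam b h N g i <= p i].
Proof.
move=> hpos Npos g0 p0 Hg.
have P3 := L_P3 hpos Npos g0 p0 Hg.
have HH := L_H hpos Npos g0 P3.
have F0 := L_F0 b hpos g0.
have U : (1%:M - Fmat b h g) \in unitmx by apply: (unit_lem F0 p0 HH).
have U0 : forall i, 0 <= Uvec b h N g i 0.
  by move=> i; rewrite mxE mulr_ge0 ?invr_ge0 ?mulr_ge0 // ltW.
split => //.
  apply: (mono F0 p0 HH) => i.
  by rewrite [X in _ <= X](L_peq N U) lerDl.
move=> i; rewrite -subr_ge0; move: i.
apply: (mono F0 p0 HH) => i.
under eq_bigr do rewrite mulrBr.
rewrite sumrB (L_peq N U i).
have := P3 i; lra.
Qed.

Lemma L_sinr (R : realFieldType) (M B : nat) (b : 'I_M -> 'I_B)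
  (h : 'I_B -> 'I_M -> R) (N : 'I_B -> R) (g : 'I_M -> R) :
  (forall m i, 0 < h m i) -> (forall m, 0 < N m) ->
  (1%:M - Fmat b h g) \in unitmx -> (forall i, 0 <= pgam b h N g i) ->
  forall i, sinr b h N (pgam b h N g) i = g i.
Proof.
move=> hpos Npos U p0 i.
have D := @L_den _ _ _ b h N (pgam b h N g) i hpos Npos p0.
rewrite /sinr (L_peq N U i) L_Fsum mxE.
set S := \sum_(j < M | j != i) _ in D *.
have hi := hpos (b i) i.
by field; rewrite !gt_eqF.
Qed.

Unset Implicit Arguments. Set Strict Implicit.

Theorem proposition1 (R : realFieldType) (M B K : nat)
  (b : 'I_M -> 'I_B) (prio : 'I_M -> 'I_K)
  (h : 'I_B -> 'I_M -> R) (N : 'I_B -> R) (pmax tar : 'I_M -> R)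
  (hpos : forall m i, 0 < h m i) (Npos : forall m, 0 < N m)
  (pmaxpos : forall i, 0 < pmax i) (tarpos : forall i, 0 < tar i)
  (gstar : 'I_M -> R)
  (hopt : sinr_optimal b prio h N pmax tar gstar) :
  pow_optimal b prio h N pmax tar (pgam b h N gstar) /\
  (forall p' : 'I_M -> R, pow_optimal b prio h N pmax tar p' ->
     (forall i, p' i <= pgam b h N gstar i) ->
     forall i, p' i = pgam b h N gstar i).
Proof.
case: hopt => [[T [[g0 U pb] Gg]] opt].
set ps := pgam b h N gstar.
have ps0 : forall i, 0 <= ps i by move=> i; case/andP: (pb i).
have Es : forall i, sinr b h N ps i = gstar i := L_sinr hpos Npos U ps0.
have Tc : forall i, (tar i <= gstar i) = (0 < gstar i).
  by move=> i; case: (T i) => ->; rewrite ?tarpos ?lexx ?ltxx // leNgt tarpos.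
have SA : Scard b h N tar ps = Acard gstar.
  by apply: eq_card => i; rewrite !inE Es Tc.
have psF : pow_feasible b prio h N pmax tar ps.
  split => // i Pi; rewrite Es => Hi j Pj; rewrite Es; exact: Gg Pi Hi j Pj.
have build : forall p', pow_feasible b prio h N pmax tar p' ->
    (Scard b h N tar p' <= Acard gstar)%N.
  move=> p' [p'b Gp'].
  have p'0 : forall i, 0 <= p' i by move=> i; case/andP: (p'b i).
  pose g' := fun i => if tar i <= sinr b h N p' i then tar i else 0.
  have g'0 : forall i, 0 <= g' i by move=> i; rewrite /g'; case: ifP => // _; exact: ltW.
  have Hg' : forall i, 0 < g' i -> g' i <= sinr b h N p' i.
    by move=> i; rewrite /g'; case: ifP => // _; rewrite ltxx.
  have Eg : forall i, (tar i <= g' i) = (tar i <= sinr b h N p' i).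
    move=> i; rewrite /g'; case: ifP => [_|_]; first by rewrite lexx.
    by rewrite leNgt tarpos.
  have Ag : Acard g' = Scard b h N tar p'.
    apply: eq_card => i; rewrite !inE /g'; case: ifP => _; first by rewrite tarpos.
    by rewrite ltxx.
  case: (L_all hpos Npos g'0 p'0 Hg') => U' q0 qle.
  rewrite -Ag; apply: opt; split; [|split; [split|]].
  - by move=> i; rewrite /g'; case: ifP => _; [left|right].
  - exact: g'0.
  - exact: U'.
  - move=> i; rewrite q0 /=; apply: le_trans (qle i) _; by case/andP: (p'b i).
  - move=> i Pi; rewrite Eg => Hi j Pj; rewrite Eg; exact: Gp' Pi Hi j Pj.
split.
  by split => // p' /build; rewrite SA.
move=> p' [[p'b Gp'] opt'] ple.
have p'0 : forall i, 0 <= p' i by move=> i; case/andP: (p'b i).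
have le1 : (Scard b h N tar ps <= Scard b h N tar p')%N by apply: opt'.
have ps_z : forall i, gstar i = 0 -> ps i = 0.
  move=> i gi; rewrite /ps (L_peq N U i) big1 ?add0r; last first.
    by move=> j _; rewrite L_Frow ?mul0r.
  by rewrite mxE gi !mul0r.
have sub : [set i | tar i <= sinr b h N p' i] \subset [set i | 0 < gstar i].
  apply/subsetP => i; rewrite !inE -Tc => Hi.
  case: (T i) => [->|gi]; first exact: lexx.
  have p'i : p' i = 0 by apply/eqP; rewrite eq_le p'0 andbT -(ps_z i gi) ple.
  by move: Hi; rewrite /sinr p'i mulr0 mul0r leNgt tarpos.
have eqS : [set i | tar i <= sinr b h N p' i] = [set i | 0 < gstar i].
  apply/eqP; rewrite eqEcard sub /=; by move: le1; rewrite SA.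
have Hg : forall i, 0 < gstar i -> gstar i <= sinr b h N p' i.
  move=> i gi; have : i \in [set i | 0 < gstar i] by rewrite inE.
  rewrite -eqS inE; case: (T i) => e; rewrite e //; by rewrite e ltxx in gi.
case: (L_all hpos Npos g0 p'0 Hg) => _ _ qle.
by move=> i; apply/eqP; rewrite eq_le ple qle.
Qed.
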